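(* Consider IMR(1) (order $p=1$) as described in the context, where exactly the first $\ell$ data points are labeled, i.e. $L=\{1,\dots,\ell\}$. If $$\left|\sum_{t=1}^{\ell-1}\left(y^{(0)}_t-x_t\right)\left(y^{(0)}_{t+1}-x_{t+1}\right)\right|<\sum_{t=1}^{\ell-1}\left(y^{(0)}_t-x_t\right)^2,$$ then $|\phi_1^{(k)}|<1$ for all iterations $k$ with $0\le k\le n-\ell$.
   Context: Let $n\ge 1$ and let $x=(x_1,\dots,x_n)\in\mathbb{R}^n$ be an observed time series. A set $L\subseteq\{1,\dots,n\}$ of labeled indices is given, together with labeled values $y^{(0)}_t$ for $t\in L$; for $t\notin L$ put $y^{(0)}_t=x_t$. Fix a threshold $\tau\ge 0$. IMR(1) produces sequences $y^{(k)}\in\mathbb{R}^n$, $k=0,1,2,\dots$; write $z^{(k)}_t=y^{(k)}_t-x_t$. In iteration $k$: (S1) $\phi^{(k)}_1=\dfrac{\sum_{t=1}^{n-1}z^{(k)}_tz^{(k)}_{t+1}}{\sum_{t=1}^{n-1}(z^{(k)}_t)^2}$ (ordinary least squares). (S2) For each $t\in\{2,\dots,n\}\setminus L$ compute $\hat y^{(k)}_t=\phi^{(k)}_1z^{(k)}_{t-1}+x_t$; $t$ is a candidate only if $|\hat y^{(k)}_t-y^{(k)}_t|>\tau$. (S3) If candidates exist, choose a candidate $t^*$ minimizing $|\hat y^{(k)}_t-x_t|$ (ties broken arbitrarily), set $y^{(k+1)}_{t^*}=\hat y^{(k)}_{t^*}$ and keep all other values; if no candidate exists, the algorithm terminates and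 $y^{(k+1)}=y^{(k)}$ from then on. Labeled values are never modified. *)

(* Defs.v *)
(* Time series indexed by nat; only indices 1..n matter. *)
From mathcomp Require Import all_boot all_order all_algebra.
Set Implicit Arguments. Unset Strict Implicit. Unset Printing Implicit Defensive.
Import Order.TTheory GRing.Theory Num.Theory.
Local Open Scope ring_scope.

Section IMR.
Variable R : realFieldType.

Definition resid (x y : nat -> R) (t : nat) : R := y t - x t.

(* (S1) OLS estimate of phi_1 from y (sums over t = 1 .. n-1) *)
Definition phi1 (n : nat) (x y : nat -> R) : R :=
  (\sum_(1 <= t < n) resid x y t * resid x y t.+1) /
  (\sum_(1 <= t < n) resid x y t ^+ 2).

Definition yhat (n : nat) (x y : nat -> R) (t : nat) : R :=
  phi1 n x y * resid x y t.-1 + x t.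

Definition candidate (n : nat) (L : pred nat) (tau : R) (x y : nat -> R)
    (t : nat) : Prop :=
  [/\ (2 <= t)%N, (t <= n)%N, ~~ L t & tau < `|yhat n x y t - y t| ].

(* (S3) one IMR(1) iteration y -> y' (ties broken arbitrarily; termination
   means y' = y forever afterwards) *)
Definition imr_step (n : nat) (L : pred nat) (tau : R) (x y y' : nat -> R)
    : Prop :=
  (exists ts, [/\ candidate n L tau x y ts,
      (forall t, candidate n L tau x y t ->
         `|yhat n x y ts - x ts| <= `|yhat n x y t - x t|)
    & y' = (fun t => if t == ts then yhat n x y ts else y t)])
  \/ ((forall t, ~ candidate n L tau x y t) /\ y' = y).

Definition y_init (L : pred nat) (x ylab : nat -> R) : nat -> R :=
  fun t => if L t then ylab t else x t.

End IMR.

(* Main.v *)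
Require Import Defs.
From mathcomp Require Import all_boot all_order all_algebra.
From mathcomp Require Import ring lra zify.
Import Order.TTheory GRing.Theory Num.Theory.
Local Open Scope ring_scope.
Section H.
Variable R : realFieldType.
Implicit Types (z f g : nat -> R).

Lemma shift_sum f m : \sum_(1 <= t < m.+1) f t.+1 + f 1%N = \sum_(1 <= t < m.+1) f t + f m.+1.
Proof.
elim: m => [|m IH]; first by rewrite !big_geq.
rewrite !(@big_nat_recr _ _ _ m.+1) //=.
by rewrite -addrA (addrC (f m.+2)) addrA IH addrAC.
Qed.

Lemma strict_sum f g a b t0 : (a <= t0 < b)%N ->
  (forall t, (a <= t < b)%N -> f t <= g t) -> f t0 < g t0 ->
  \sum_(a <= t < b) f t < \sum_(a <= t < b) g t.
Proof.
move=> /andP[h1 h2] hle hlt.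
rewrite !(@big_cat_nat _ _ _ t0 a b) //= ?(ltnW h2) //.
rewrite !(big_ltn h2).
apply: ler_ltD; first by apply: ler_sum_nat => t /andP[ht1 ht2]; apply: hle; lia.
apply: ltr_leD => //; apply: ler_sum_nat => t /andP[ht1 ht2]; apply: hle; lia.
Qed.

Lemma amgm (a b : R) : 2 * `|a * b| <= a ^+ 2 + b ^+ 2.
Proof.
rewrite normrM -(real_normK (num_real a)) -(real_normK (num_real b)).
have := normr_ge0 a; have := normr_ge0 b.
set u := `|a|; set v := `|b| => hu hv.
have : 0 <= (v - u) ^+ 2 by apply: sqr_ge0.
rewrite !expr2; lra.
Qed.

Lemma pd z m i : z m.+1 = 0 -> (1 <= i <= m)%N -> z i != 0 ->
  `|\sum_(1 <= t < m.+1) z t * z t.+1| < \sum_(1 <= t < m.+1) z t ^+ 2.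
Proof.
move=> hz hi hzi.
pose P := fun t => ((i <= t <= m)%N && (z t != 0)).
have exP : exists t, P t by exists i; rewrite /P hzi leqnn; case/andP: hi => _ ->.
have ubP : forall t, P t -> (t <= m)%N by move=> t /andP[/andP[_ ->]].
case: (ex_maxnP exP ubP) => t0 /andP[/andP[h1 h2] hz0] hmax.
have hz1 : z t0.+1 = 0.
  case: (eqVneq (z t0.+1) 0) => // hne.
  case: (ltnP t0 m) => hlt.
  - have : P t0.+1 by rewrite /P hne; apply/andP; split => //; lia.
    by move/hmax; lia.
  - have -> : t0 = m by lia. by rewrite hz.
have H1 := ler_norm_sum (index_iota 1 m.+1) (fun t => z t * z t.+1) xpredT.
have H2 : \sum_(1 <= t < m.+1) 2 * `|z t * z t.+1| <
          \sum_(1 <= t < m.+1) (z t ^+ 2 + z t.+1 ^+ 2).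
  apply: (@strict_sum _ _ _ _ t0); first by (apply/andP; split; lia).
  - by move=> t _; apply: amgm.
  - rewrite hz1 mulr0 normr0 mulr0 expr0n /= addr0.
    by rewrite lt_def sqr_ge0 andbT expf_neq0.
rewrite -mulr_sumr big_split /= in H2.
have H3 := shift_sum (fun t => z t ^+ 2) m.
rewrite /= hz expr0n /= addr0 in H3.
have H4 : 0 <= z 1%N ^+ 2 by apply: sqr_ge0.
move: H1 H2 H3 H4.
set S := \sum_(1 <= t < m.+1) z t * z t.+1.
set Sa := \sum_(_ <= _ < _ | _) _.
set A := \sum_(1 <= t < m.+1) z t ^+ 2.
set B := \sum_(1 <= t < m.+1) z t.+1 ^+ 2.
rewrite /Sa big_mkcond /=.
lra.
Qed.

End H.
Lemma sumS_trunc (R : realFieldType) (z : nat -> R) m n : (1 <= m <= n)%N ->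
  (forall t, (m < t)%N -> z t = 0) ->
  \sum_(1 <= t < n) z t * z t.+1 = \sum_(1 <= t < m) z t * z t.+1.
Proof.
move=> /andP[h1 h2] hz.
rewrite (@big_cat_nat _ _ _ m 1 n) //= -[RHS]addr0; congr (_ + _).
rewrite big_nat big1 // => t /andP[ht _].
by rewrite (hz t.+1) ?mulr0.
Qed.

Lemma sumA_trunc (R : realFieldType) (z : nat -> R) m n : (1 <= m)%N -> (m < n)%N ->
  (forall t, (m < t)%N -> z t = 0) ->
  \sum_(1 <= t < n) z t ^+ 2 = \sum_(1 <= t < m) z t ^+ 2 + z m ^+ 2.
Proof.
move=> h1 h2 hz.
rewrite (@big_cat_nat _ _ _ m.+1 1 n) //= big_nat_recr //= -[RHS]addr0; congr (_ + _).
rewrite big_nat big1 ?addr0 // => t /andP[ht _].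
by rewrite (hz t) // expr0n.
Qed.

Lemma sumA_ge (R : realFieldType) (z : nat -> R) m n : (1 <= m <= n)%N ->
  \sum_(1 <= t < m) z t ^+ 2 <= \sum_(1 <= t < n) z t ^+ 2.
Proof.
move=> /andP[h1 h2].
rewrite (@big_cat_nat _ _ _ m 1 n) //= lerDl.
by apply: sumr_ge0 => t _; apply: sqr_ge0.
Qed.

Theorem lemma2 (R : realFieldType) (n l : nat) (x ylab : nat -> R) (tau : R)
  (Y : nat -> nat -> R) :
  (1 <= n)%N -> (l <= n)%N -> 0 <= tau ->
  let L : pred nat := fun t => (1 <= t <= l)%N in
  Y 0%N = y_init L x ylab ->
  (forall k, imr_step n L tau x (Y k) (Y k.+1)) ->
  `|\sum_(1 <= t < l) (Y 0%N t - x t) * (Y 0%N t.+1 - x t.+1)|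
     < \sum_(1 <= t < l) (Y 0%N t - x t) ^+ 2 ->
  forall k, (k <= n - l)%N -> `|phi1 n x (Y k)| < 1.
Proof.
move=> hn hl htau L hY0 hstep hyp.
have [i0 [hi0 hzi0]] : exists i, (1 <= i < l)%N /\ Y 0%N i - x i != 0.
  case: (boolP (has (fun i => Y 0%N i - x i != 0) (index_iota 1 l))).
    by move=> /hasP [i]; rewrite mem_index_iota => hi hz; exists i.
  move=> hno; exfalso.
  have hz0 : forall i, (1 <= i < l)%N -> Y 0%N i - x i = 0.
    move=> i hi; apply/eqP; apply/negPn/negP => hz.
    move/negP: hno => hno; apply: hno; apply/hasP; exists i => //.
    by rewrite mem_index_iota.
  have E1 : \sum_(1 <= t < l) (Y 0%N t - x t) ^+ 2 = 0.
    by rewrite big_nat big1 // => t ht; rewrite hz0 // expr0n.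
  by move: hyp; rewrite E1 ltNge normr_ge0.
pose Inv j := [/\ (forall t, (l + j < t)%N -> Y j t = x t),
  (forall t, (1 <= t <= l)%N -> Y j t = Y 0%N t) &
  `|\sum_(1 <= t < l + j) (Y j t - x t) * (Y j t.+1 - x t.+1)|
     < \sum_(1 <= t < l + j) (Y j t - x t) ^+ 2].
have Hinv : forall j, (j <= n - l)%N -> Inv j.
  elim => [_|j IH hj].
    split => //; last by rewrite addn0.
    by move=> t ht; rewrite hY0 /y_init /L; case: ifP => //; lia.
  have [Ha Hb Hc] := IH (ltnW hj).
  set m := (l + j)%N in Ha Hb Hc.
  have hm1 : (1 <= m)%N by rewrite /m; lia.
  have hmn : (m < n)%N by rewrite /m; lia.
  have hi0m : (1 <= i0 <= m)%N by rewrite /m; lia.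
  have hzi0' : Y j i0 - x i0 != 0 by rewrite Hb //; lia.
  have Hphi : phi1 n x (Y j) = (\sum_(1 <= t < m) (Y j t - x t) * (Y j t.+1 - x t.+1))
      / (\sum_(1 <= t < m) (Y j t - x t) ^+ 2 + (Y j m - x m) ^+ 2).
    rewrite /phi1 /resid (@sumS_trunc _ (fun t => Y j t - x t) m n) ?hm1 ?(ltnW hmn) //;
      last by move=> t ht; rewrite Ha ?subrr.
    by rewrite (@sumA_trunc _ (fun t => Y j t - x t) m n) // => t ht; rewrite Ha ?subrr.
  rewrite /Inv addnS.
  case: (hstep j) => [[ts [[h2 hts hL hc] hmin hY']] | [_ ->]]; last first.
    split => //; first by move=> t ht; apply: Ha; lia.
    apply: (@pd _ (fun t => Y j t - x t) m i0) => //=.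
    by rewrite Ha ?subrr.
  have hlts : (l < ts)%N by move: hL; rewrite /L; lia.
  have htsm : (ts <= m.+1)%N.
    rewrite leqNgt; apply/negP => hgt.
    move: hc; rewrite /yhat /resid (Ha ts) ?(Ha ts.-1) ?subrr ?mulr0 ?add0r ?subrr ?normr0; try lia.
    by rewrite ltNge htau.
  rewrite hY' /m; split.
  - move=> t ht /=; have -> : (t == ts) = false by apply/negbTE; apply/eqP; lia.
    by apply: Ha; lia.
  - move=> t ht /=; have -> : (t == ts) = false by apply/negbTE; apply/eqP; lia.
    by apply: Hb.
  rewrite -/m; case: (eqVneq ts m.+1) => [hE|hN].
  - rewrite big_nat_recr //=.
    rewrite [in X in _ < X]big_nat_recr //=.
    rewrite !hE (_ : (m == m.+1) = false); last by apply/negbTE; rewrite neq_ltn ltnSn.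
    rewrite eqxx.
    rewrite (@eq_big_nat _ _ _ 1 m _ (fun t => (Y j t - x t) * (Y j t.+1 - x t.+1))); last first.
      move=> t /andP[_ ht']; have e1 : (t == m.+1) = false by apply: ltn_eqF; apply: leqW.
      have e2 : (t.+1 == m.+1) = false by apply: ltn_eqF; rewrite ltnS.
      by rewrite e1 e2.
    rewrite [in X in _ < X](@eq_big_nat _ _ _ 1 m _ (fun t => (Y j t - x t) ^+ 2)); last first.
      move=> t /andP[_ ht']; have e1 : (t == m.+1) = false by apply: ltn_eqF; apply: leqW.
      by rewrite e1.
    rewrite /yhat /resid /= Hphi.
    move: Hc.
    set S := \sum_(1 <= t < m) _.
    set A := \sum_(1 <= t < m) _.
    set u := (Y j m - x m) ^+ 2.
    have hu : 0 <= u by apply: sqr_ge0.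
    have -> : (Y j m - x m) * (S / (A + u) * (Y j m - x m) + x m.+1 - x m.+1) = S / (A+u) * u.
      by rewrite /u; ring.
    move=> Hc.
    have hA : 0 < A + u by have := normr_ge0 S; lra.
    have -> : S + S / (A + u) * u = (S / (A + u)) * (A + u + u).
      by field; apply: lt0r_neq0.
    have hq : `|S / (A + u)| * (A + u) < A.
      by rewrite normrM normfV (gtr0_norm hA) mulrAC -mulrA divff ?mulr1 // lt0r_neq0.
    have hq1 : `|S / (A + u)| <= 1.
      have : `|S / (A + u)| * (A + u) <= 1 * (A + u) by lra.
      by rewrite ler_pM2r.
    rewrite normrM (ger0_norm (x := A + u + u)); last lra.
    move: hq hq1; set q := `|S / (A + u)| => hq hq1.
    have hqu : q * u <= u by rewrite -{2}(mul1r u) ler_wpM2r.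
    by rewrite mulrDr; apply: ltr_leD.
  - apply: (@pd _ _ m i0) => //=.
    + by rewrite eq_sym (negbTE hN) Ha ?subrr.
    + by rewrite (_ : (i0 == ts) = false) //; apply/negbTE; apply/eqP; lia.
move=> k hk.
have [Ha Hb Hc] := Hinv k hk.
have hm : (1 <= l + k <= n)%N by lia.
rewrite /phi1 /resid (@sumS_trunc _ (fun t => Y k t - x t) (l + k) n) //;
  last by move=> t ht; rewrite Ha ?subrr.
have hge := @sumA_ge _ (fun t => Y k t - x t) _ _ hm.
move: Hc hge.
set S := \sum_(1 <= t < l + k) _.
set A := \sum_(1 <= t < l + k) _.
set B := \sum_(1 <= t < n) _.
move=> Hc hge.
have hB : 0 < B by have := normr_ge0 S; lra.
rewrite normrM normfV (gtr0_norm hB) ltr_pdivrMr // mul1r.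
lra.
Qed.
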